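(* For every share function $\rho$, the modified $\rho$-blame $\mathbf{MB}^\rho$ is an unbiased, derivative-dependent importance value function. If moreover there is $0\le\lambda<1$ such that $\rho(k)=\lambda^k$ for all integers $k\ge1$, then $\mathbf{MB}^\rho$ is chain-rule decomposable.
   Context: $X$ is a fixed finite set of $n=|X|$ variables. An assignment over $U\subseteq X$ is a map $\mathbf u:U\to\{0,1\}$; $\mathbf u;\mathbf v$ is concatenation of assignments with disjoint domains, $\mathbf u_S$ is restriction. For $S\subseteq X$ and $\mathbf u$ over $X$, $\mathbf u^{\oplus S}$ flips the values of the variables in $S$. $\mathbb B(X)$ is the set of Boolean functions $\{0,1\}^X\to\{0,1\}$, combined pointwise by $\lor,\land$ (juxtaposition), $\oplus$, negation $\overline f$; a variable $x$ also denotes $\mathbf u\mapsto\mathbf u(x)$; $f\ge g$ is pointwise. Cofactor: $f_{\mathbf v}(\mathbf u)=f(\mathbf v;\mathbf u_{X\setminus V})$ for $\mathbf v$ over $V$; $f_{x/c}$ for $V=\{x\}$. $\mathrm{dep}(f)=\{x: f_{x/1}\ne f_{x/0}\}$; $f$ is monotone in $x$ if $f_{x/1}\ge f_{x/0}$. $f^{\oplus y}(\mathbf u)=f(\mathbf u^{\oplus\{y\}})$. For a permutation $\sigma$ of $X$: $(\sigma\mathbf u)(x)=\mathbf u(\sigma^{-1}(x))$, $(\sigma f)(\mathbf u)=f(\sigma^{-1}\mathbf u)$. $f[x/s]=s f_{x/1}\lor\overline s f_{x/0}$; $\mathrm D_xf=f_{x/1}\oplus f_{x/0}$. Modularity: $f$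 is modular in $g$ if $g$ is not constant and there are $\ell\in\mathbb B(X)$, $z\in X$ with $\mathrm{dep}(\ell)\cap\mathrm{dep}(g)=\emptyset$ and $f=\ell[z/g]$; monotonically modular if moreover $\ell$ is monotone in $z$. Then $f_{g/1}:=\ell_{z/1}$, $f_{g/0}:=\ell_{z/0}$ (well defined), and for a variable $w$, $f[g/w]:=w f_{g/1}\lor\overline w f_{g/0}$. A value function is a map $\mathfrak I:X\times\mathbb B(X)\to\mathbb R$, $(x,f)\mapsto\mathfrak I_x(f)$. It is an importance value function (IVF) if for all $x,y\in X$, permutations $\sigma$ of $X$ and $f,g,h\in\mathbb B(X)$: (Bound) $0\le\mathfrak I_x(f)\le1$; (Dum) $\mathfrak I_x(f)=0$ if $x\notin\mathrm{dep}(f)$; (Dic) $\mathfrak I_x(x)=\mathfrak I_x(\overline x)=1$; (Type) $\mathfrak I_x(f)=\mathfrak I_{\sigma(x)}(\sigma f)$ and $\mathfrak I_x(f)=\mathfrak I_x(f^{\oplus y})$; (ModEC) $\mathfrak I_x(f)\ge\mathfrak I_x(h)$ whenever $f$ and $h$ are monotonically modular in $g$, $f_{g/1}\ge h_{g/1}$, $h_{g/0}\ge f_{g/0}$, and $x\in\mathrm{dep}(g)$. $\mathfrak I$ is unbiased if $\mathfrak I_x(g)=\mathfrak I_x(\overline g)$ for all $x,g$. It is derivative dependent if $\mathrm D_xf\ge\mathrm D_xg\Rightarrow\mathfrak I_x(f)\ge\mathfrak I_x(g)$ for all $f,g,x$; chain-rule decomposable if for all $f$ modular in $g$ and $x\in\mathrm{dep}(g)$: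 $\mathfrak I_x(f)=\mathfrak I_x(g)\,\mathfrak I_g(f)$, where $\mathfrak I_g(f):=\mathfrak I_{x_g}(f[g/x_g])$ for a variable $x_g\notin\mathrm{dep}(f)$. A share function is $\rho:\mathbb N\cup\{\infty\}\to\mathbb R$, monotonically decreasing, with $\rho(\infty)=\lim_{k\to\infty}\rho(k)=0$ and $\rho(0)=1$. For $f$, $x$ and $\mathbf u$ over $X$, $\mathrm{mscs}^{\mathbf u}_x(f)$ is the minimum size of a set $S\subseteq X\setminus\{x\}$ with $f(\mathbf u^{\oplus S})\ne f(\mathbf u^{\oplus(S\cup\{x\})})$ ($\infty$ if none exists). The modified $\rho$-blame is $\mathbf{MB}^\rho_x(f)=\mathbb E_{\mathbf u\in\{0,1\}^X}[\rho(\mathrm{mscs}^{\mathbf u}_x(f))]$ under the uniform distribution. *)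

(* Defs.v *)
From HB Require Import structures.
From mathcomp Require Import all_boot all_order all_algebra all_fingroup.
From mathcomp Require Import all_classical all_reals all_analysis.
Set Implicit Arguments. Unset Strict Implicit. Unset Printing Implicit Defensive.
Import Order.TTheory GRing.Theory Num.Theory.
Local Open Scope ring_scope.

Section Defs.
Variable X : finType.

Definition asg := {ffun X -> bool}.
Definition BF := {ffun asg -> bool}.

Definition upd (u : asg) (x : X) (c : bool) : asg :=
  [ffun y => if y == x then c else u y].
Definition flip (u : asg) (S : {set X}) : asg := [ffun y => u y (+) (y \in S)].

Definition cof (f : BF) (x : X) (c : bool) : BF := [ffun u => f (upd u x c)].
Definition dep (f : BF) : {set X} := [set x | cof f x true != cof f x false].
Definition leBF (g f : BF) : Prop := forall u, g u ==> f u.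
Definition monotone_in (f : BF) (x : X) : Prop := leBF (cof f x false) (cof f x true).
Definition var (x : X) : BF := [ffun u : asg => u x].
Definition negBF (f : BF) : BF := [ffun u => ~~ f u].
Definition flipBF (f : BF) (y : X) : BF := [ffun u => f (flip u [set y])].
Definition perm_asg (s : {perm X}) (u : asg) : asg := [ffun x => u (perm_inv s x)].
Definition perm_BF (s : {perm X}) (f : BF) : BF := [ffun u => f (perm_asg (perm_inv s) u)].
Definition subst (f : BF) (x : X) (s : BF) : BF :=
  [ffun u => (s u && cof f x true u) || (~~ s u && cof f x false u)].
Definition Dx (x : X) (f : BF) : BF := [ffun u => cof f x true u (+) cof f x false u].

Definition nonconstant (g : BF) : Prop := exists u v, g u != g v.

Definition modular_wit (f g l : BF) (z : X) : Prop :=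
  [/\ nonconstant g, [disjoint dep l & dep g] & f = subst l z g].
Definition modular (f g : BF) : Prop := exists l z, modular_wit f g l z.
Definition mono_modular_wit (f g l : BF) (z : X) : Prop :=
  modular_wit f g l z /\ monotone_in l z.
(* with witness (l,z): f_{g/1} = l_{z/1}, f_{g/0} = l_{z/0} (well defined),
   f[g/w] = w f_{g/1} \/ ~w f_{g/0} *)
Definition subst_g (l : BF) (z : X) (w : X) : BF :=
  [ffun u : asg => (u w && cof l z true u) || (~~ u w && cof l z false u)].

Definition value_fun (R : realType) := X -> BF -> R.

Definition is_IVF (R : realType) (I : value_fun R) : Prop :=
  [/\ (forall x f, 0 <= I x f <= 1),
      (forall x f, x \notin dep f -> I x f = 0),
      (forall x, I x (var x) = 1 /\ I x (negBF (var x)) = 1),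
      (forall x y (s : {perm X}) f,
                   I x f = I (s x) (perm_BF s f) /\ I x f = I x (flipBF f y)) &
      (forall x f h g lf zf lh zh,
           mono_modular_wit f g lf zf -> mono_modular_wit h g lh zh ->
           leBF (cof lh zh true) (cof lf zf true) ->
           leBF (cof lf zf false) (cof lh zh false) ->
           x \in dep g -> I x h <= I x f)].

Definition unbiased (R : realType) (I : value_fun R) : Prop :=
  forall x g, I x g = I x (negBF g).

Definition derivative_dependent (R : realType) (I : value_fun R) : Prop :=
  forall f g x, leBF (Dx x g) (Dx x f) -> I x g <= I x f.

(* I_g(f) := I_{x_g}(f[g/x_g]) for x_g not in dep f *)
Definition chain_rule_decomposable (R : realType) (I : value_fun R) : Prop :=
  forall f g l z x xg, modular_wit f g l z -> x \in dep g -> xg \notin dep f ->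
    I x f = I x g * I xg (subst_g l z xg).

(* mscs^u_x(f) in N \cup {oo}, encoded as option nat (None = oo) *)
Definition mscs_cands (u : asg) (x : X) (f : BF) : {set {set X}} :=
  [set S : {set X} | (x \notin S) && (f (flip u S) != f (flip u (x |: S)))].
Definition mscs (u : asg) (x : X) (f : BF) : option nat :=
  if [pick S in mscs_cands u x f] is Some S0 then
    Some #|[arg min_(S < S0 in mscs_cands u x f) #|S|]|
  else None.

(* share functions rho : N \cup {oo} -> R (None = oo) *)
Definition share_function (R : realType) (rho : option nat -> R) : Prop :=
  [/\ (forall k m : nat, (k <= m)%N -> rho (Some m) <= rho (Some k)),
      (forall k : nat, rho None <= rho (Some k)),
      rho None = 0,
      ((fun k => rho (Some k)) @ \oo --> 0)%classic &
      rho (Some 0%N) = 1].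

Definition MB (R : realType) (rho : option nat -> R) : value_fun R :=
  fun x f => (#|{: asg}|%:R)^-1 * \sum_(u : asg) rho (mscs u x f).

End Defs.

(* Main.v *)
Require Import Defs.
From HB Require Import structures.
From mathcomp Require Import all_boot all_order all_algebra all_fingroup.
From mathcomp Require Import all_classical all_reals all_analysis.
Import Order.TTheory GRing.Theory Num.Theory.
Local Open Scope ring_scope.
Set Implicit Arguments. Unset Strict Implicit. Unset Printing Implicit Defensive.

Section Helpers.
Variable X : finType.
Implicit Types (u w : asg X) (f g F : BF X) (x y z : X) (S : {set X}).

Definition msz (C : {set {set X}}) : option nat :=
  if [pick S in C] is Some S0 then
    Some #|[arg min_(S < S0 in C) #|S|]|
  else None.

Lemma mscs_msz u x f : mscs u x f = msz (mscs_cands u x f).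
Proof. by []. Qed.

Variant msz_spec (C : {set {set X}}) : option nat -> Prop :=
| MszNone of (forall S, S \notin C) : msz_spec C None
| MszSome S0 of S0 \in C & (forall S, S \in C -> (#|S0| <= #|S|)%N) :
    msz_spec C (Some #|S0|).

Lemma mszP C : msz_spec C (msz C).
Proof.
rewrite /msz; case: pickP => [S0 HS0|H].
  case: arg_minnP => // S1 HS1 Hmin; by constructor.
by constructor => S; rewrite H.
Qed.

Definition ole (o1 o2 : option nat) : bool :=
  match o2, o1 with
  | None, _ => true
  | Some k2, Some k1 => (k1 <= k2)%N
  | Some _, None => false
  end.

Lemma msz_dom (C1 C2 : {set {set X}}) :
  (forall S, S \in C2 -> exists2 S', S' \in C1 & (#|S'| <= #|S|)%N) ->
  ole (msz C1) (msz C2).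
Proof.
move=> H; case: (mszP C2) => [H2|S2 HS2 Hm2]; first by case: (msz C1).
have [S' HS' Hle] := H _ HS2.
case: (mszP C1) => [H1|S1 HS1 Hm1]; first by rewrite (negbTE (H1 S')) in HS'.
exact: leq_trans (Hm1 _ HS') Hle.
Qed.

Lemma ole_anti o1 o2 : ole o1 o2 -> ole o2 o1 -> o1 = o2.
Proof.
by case: o1 => [a|]; case: o2 => [b|] //= h1 h2; congr Some; apply/eqP; rewrite eqn_leq h1 h2.
Qed.

Lemma msz_eq (C1 C2 : {set {set X}}) :
  (forall S, S \in C2 -> exists2 S', S' \in C1 & (#|S'| <= #|S|)%N) ->
  (forall S, S \in C1 -> exists2 S', S' \in C2 & (#|S'| <= #|S|)%N) ->
  msz C1 = msz C2.
Proof. by move=> h1 h2; apply: ole_anti; apply: msz_dom. Qed.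

Lemma upd_id u x : upd u x (u x) = u.
Proof. by apply/ffunP => y; rewrite /upd ffunE; case: eqP => [->|]. Qed.

Lemma upd_upd u x c d : upd (upd u x d) x c = upd u x c.
Proof. by apply/ffunP => y; rewrite /upd /cof !ffunE; case: (y == x). Qed.

Lemma upd_comm u x y c d : x != y -> upd (upd u x c) y d = upd (upd u y d) x c.
Proof.
move=> nxy; apply/ffunP => t; rewrite /upd /cof !ffunE.
case Ey: (t == y); case Ex: (t == x) => //.
by move: nxy; rewrite -(eqP Ex) -(eqP Ey) eqxx.
Qed.

Lemma nodep_upd' F x :
  (forall w, F (upd w x true) = F (upd w x false)) ->
  forall w d, F (upd w x d) = F w.
Proof.
move=> H w d; rewrite -{2}(upd_id w x).
by case: d; case: (w x) => //; rewrite H.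
Qed.

Lemma nodepP F x : x \notin dep F -> forall w, F (upd w x true) = F (upd w x false).
Proof.
rewrite inE negbK => /eqP E w.
by move/ffunP: E => /(_ w); rewrite /cof !ffunE.
Qed.

Lemma nodep_upd F x : x \notin dep F -> forall w d, F (upd w x d) = F w.
Proof. by move/nodepP; apply: nodep_upd'. Qed.

Lemma nodepI F x : (forall w d, F (upd w x d) = F w) -> x \notin dep F.
Proof.
move=> H; rewrite inE negbK; apply/eqP/ffunP => w; by rewrite /upd /cof !ffunE !H.
Qed.

Lemma nodep_cof l z c x : x \notin dep l -> forall w d, cof l z c (upd w x d) = cof l z c w.
Proof.
move=> Hx w d; rewrite /upd /cof !ffunE.
case: (eqVneq x z) => [->|nxz]; first by rewrite upd_upd.
by rewrite upd_comm // nodep_upd.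
Qed.

Lemma dep_cof l z c x : x \notin dep l -> x \notin dep (cof l z c).
Proof. by move=> Hx; apply: nodepI; apply: nodep_cof. Qed.

Lemma dep_agree F u u' : (forall y, y \in dep F -> u y = u' y) -> F u = F u'.
Proof.
move=> H.
move Hn: #|[set y | u y != u' y]| => n.
elim: n u H Hn => [|n IH] u H Hn.
  have -> : u = u'; last by [].
  apply/ffunP => y; apply/eqP; apply: contraT => Hy.
  have : y \in [set y | u y != u' y] by rewrite inE.
  by move/eqP: Hn; rewrite cards_eq0 => /eqP ->; rewrite inE.
have [y Hy] : exists y, y \in [set y | u y != u' y].
  by apply/set0Pn; rewrite -cards_eq0 Hn.
have Hyd : y \notin dep F.
  by apply: contraT; rewrite negbK => /H; move: Hy; rewrite inE => /eqP.
rewrite -(nodep_upd Hyd u (u' y)); apply: IH.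
  move=> t Ht; rewrite /upd ffunE; case: eqP => [->//|_]; exact: H.
rewrite (cardsD1 y) Hy add1n in Hn; case: Hn => <-.
apply: eq_card => t; rewrite !inE /upd ffunE.
by case: (eqVneq t y) => [->|]; rewrite ?eqxx.
Qed.

Definition K (D : BF X) u : {set {set X}} := [set S | D (flip u S)].

Lemma Dx_upd x f w c : Dx x f (upd w x c) = Dx x f w.
Proof. by rewrite /Dx /cof !ffunE !upd_upd. Qed.

Lemma flip_setU1 u x S : x \notin S ->
  flip u (x |: S) = upd (flip u S) x (~~ flip u S x).
Proof.
move=> Hx; apply/ffunP => y; rewrite /upd /flip !ffunE !inE.
case: (eqVneq y x) => [->|nyx] /=; first by rewrite (negbTE Hx) addbT addbF.
by [].
Qed.

Lemma flip_setD1 u x S : flip u (S :\ x) = upd (flip u S) x (u x).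
Proof.
apply/ffunP => y; rewrite /upd /flip !ffunE !inE.
by case: (eqVneq y x) => [->|nyx] /=; rewrite ?addbF.
Qed.

Lemma neq_Dx x f w : (f w != f (upd w x (~~ w x))) = Dx x f w.
Proof.
rewrite /Dx /cof !ffunE.
have E : f w = f (upd w x (w x)) by rewrite upd_id.
rewrite E; case: (w x) => /=;
by case: (f (upd w x true)); case: (f (upd w x false)).
Qed.

Lemma candE u x f S : x \notin S ->
  (f (flip u S) != f (flip u (x |: S))) = Dx x f (flip u S).
Proof. by move=> Hx; rewrite flip_setU1 // neq_Dx. Qed.

Lemma mscs_K u x f : mscs u x f = msz (K (Dx x f) u).
Proof.
rewrite mscs_msz; apply: msz_eq => S.
  rewrite inE => HS; exists (S :\ x); last by rewrite subset_leq_card // subD1set.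
  by rewrite inE setD11 /= candE ?setD11 // flip_setD1 Dx_upd.
rewrite inE => /andP [Hx HS]; exists S => //.
by rewrite inE -candE.
Qed.

Lemma K_sub (D1 D2 : BF X) u : (forall w, D1 w -> D2 w) ->
  ole (msz (K D2 u)) (msz (K D1 u)).
Proof.
move=> H; apply: msz_dom => S; rewrite inE => HS; exists S => //.
by rewrite inE H.
Qed.

Lemma K_ext (D1 D2 : BF X) u u' : (forall S, D1 (flip u S) = D2 (flip u' S)) ->
  msz (K D1 u) = msz (K D2 u').
Proof.
by move=> H; congr msz; apply/setP => S; rewrite !inE H.
Qed.

Lemma flip_flip u S T : flip (flip u S) T = flip (flip u T) S.
Proof. by apply/ffunP => y; rewrite /flip !ffunE -!addbA [(_ \in T) (+) _]addbC. Qed.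

Lemma flipK1 u S : flip (flip u S) S = u.
Proof. by apply/ffunP => y; rewrite /flip !ffunE -addbA addbb addbF. Qed.

Lemma mscs_flipBF u x f y : mscs u x (flipBF f y) = mscs (flip u [set y]) x f.
Proof.
rewrite !mscs_msz; congr msz; apply/setP => S; rewrite !inE /flipBF !ffunE.
by rewrite !(flip_flip _ [set y]).
Qed.

Lemma Dx_neg x g : Dx x (negBF g) = Dx x g.
Proof. by apply/ffunP => w; rewrite /Dx /cof /negBF !ffunE addbN addNb negbK. Qed.

Lemma mscs_neg u x g : mscs u x (negBF g) = mscs u x g.
Proof. by rewrite !mscs_K Dx_neg. Qed.

Lemma Dx_nodep x f : x \notin dep f -> forall w, Dx x f w = false.
Proof.
move=> H w; move: H; rewrite inE negbK => /eqP E.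
by rewrite /Dx ffunE E addbb.
Qed.

Lemma mscs_nodep u x f : x \notin dep f -> mscs u x f = None.
Proof.
move=> H; rewrite mscs_K; case: mszP => // S0; by rewrite inE Dx_nodep.
Qed.

Lemma mscs_var u x : mscs u x (var x) = Some 0%N.
Proof.
have Hin : (@finset.set0 X) \in K (Dx x (var x)) u.
  by rewrite inE /Dx /cof /var /upd !ffunE eqxx.
rewrite mscs_K; case: mszP => [H|S0 _ Hm]; first by rewrite (negbTE (H _)) in Hin.
by have := Hm _ Hin; rewrite cards0 leqn0 => /eqP ->.
Qed.

Lemma mscs_negvar u x : mscs u x (negBF (var x)) = Some 0%N.
Proof. by rewrite mscs_neg mscs_var. Qed.

Lemma Dx_subst x l z g w : x \notin dep l ->
  Dx x (subst l z g) w = Dx x g w && (cof l z true w (+) cof l z false w).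
Proof.
move=> Hx.
have E d : cof (subst l z g) x d w =
   (cof g x d w && cof l z true w) || (~~ cof g x d w && cof l z false w).
  rewrite {1}/cof ffunE /subst ffunE !(nodep_cof _ _ Hx).
  by rewrite /cof !ffunE.
have DE F : Dx x F w = cof F x true w (+) cof F x false w by rewrite /Dx ffunE.
rewrite !DE !E.
by case: (cof g x true w); case: (cof g x false w);
   case: (cof l z true w); case: (cof l z false w).
Qed.

Lemma pinvK (s : {perm X}) y : perm_inv s (s y) = y.
Proof. exact: (permK s). Qed.
Lemma pinvKV (s : {perm X}) y : s (perm_inv s y) = y.
Proof. exact: (permKV s). Qed.
Lemma pinvinv (s : {perm X}) y : perm_inv (perm_inv s) y = s y.
Proof. by apply: (@perm_inj _ (perm_inv s)); rewrite pinvKV pinvK. Qed.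

Lemma perm_asg_inj (s : {perm X}) : injective (perm_asg s).
Proof.
move=> u u' E; apply/ffunP => y.
have := congr1 (fun w : asg X => w (s y)) E; by rewrite /perm_asg !ffunE !pinvK.
Qed.

Lemma perm_candE (s : {perm X}) u x f S' :
  (S' \in mscs_cands (perm_asg s u) (s x) (perm_BF s f)) =
  (s @^-1: S' \in mscs_cands u x f).
Proof.
have E T : perm_BF s f (flip (perm_asg s u) T) = f (flip u (s @^-1: T)).
  rewrite /perm_BF ffunE; congr (fun_of_fin f); apply/ffunP => y.
  by rewrite /perm_asg /flip !ffunE pinvinv pinvK !inE.
have E2 : s @^-1: (s x |: S') = x |: s @^-1: S'.
  by apply/setP => y; rewrite !inE (inj_eq perm_inj).
by rewrite !inE !E E2.
Qed.

Lemma mscs_perm (s : {perm X}) u x f :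
  mscs (perm_asg s u) (s x) (perm_BF s f) = mscs u x f.
Proof.
rewrite !mscs_msz; apply: msz_eq => S.
  move=> HS; exists ((perm_inv s) @^-1: S); last by rewrite card_preimset //; apply: perm_inj.
  rewrite perm_candE; suff -> : s @^-1: (perm_inv s @^-1: S) = S by [].
  by apply/setP => y; rewrite !inE pinvK.
move=> HS; exists (s @^-1: S); last by rewrite card_preimset //; apply: perm_inj.
by rewrite -perm_candE.
Qed.

Definition dpo (D : BF X) (A : {set X}) :=
  forall u u', (forall y, y \in A -> u y = u' y) -> D u = D u'.

Lemma flip_agree D A u S S' : dpo D A ->
  (forall y, y \in A -> (y \in S) = (y \in S')) -> D (flip u S) = D (flip u S').
Proof. by move=> HD H; apply: HD => y Hy; rewrite /flip !ffunE H. Qed.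

Definition oadd (o1 o2 : option nat) :=
  match o1, o2 with Some a, Some b => Some (a + b)%N | _, _ => None end.

Lemma msz_split (D1 D2 : BF X) G u : dpo D1 G -> dpo D2 (~: G) ->
  msz (K [ffun w => D1 w && D2 w] u) = oadd (msz (K D1 u)) (msz (K D2 u)).
Proof.
move=> H1 H2.
case: (mszP (K D1 u)) => [N1|S1 HS1 M1].
  case: mszP => // S0; rewrite !inE ffunE => /andP [HA _].
  by have := N1 S0; rewrite inE HA.
case: (mszP (K D2 u)) => [N2|S2 HS2 M2].
  case: mszP => // S0; rewrite !inE ffunE => /andP [_ HA].
  by have := N2 S0; rewrite inE HA.
set S' := (S1 :&: G) :|: (S2 :&: ~: G).
have HS' : S' \in K [ffun w => D1 w && D2 w] u.
  rewrite !inE ffunE; move: HS1 HS2; rewrite !inE => HS1 HS2.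
  rewrite (flip_agree (S' := S1) _ H1) ?HS1 /=.
    rewrite (flip_agree (S' := S2) _ H2) ?HS2 //.
    by move=> y Hy; rewrite /S' !inE; move: Hy; rewrite ?inE; case: (y \in G) => // _; rewrite ?andbT ?andbF ?orbF.
  by move=> y Hy; rewrite /S' !inE; move: Hy; rewrite ?inE; case: (y \in G) => // _; rewrite ?andbT ?andbF ?orbF.
have cS' : (#|S'| <= #|S1| + #|S2|)%N.
  apply: leq_trans (leq_card_setU _ _) _.
  by apply: leq_add; apply: subset_leq_card; apply: subsetIl.
case: (mszP (K [ffun w => D1 w && D2 w] u)) => [N|S0 HS0 M0].
  by have := N S'; rewrite HS'.
congr Some; apply/eqP; rewrite eqn_leq; apply/andP; split.
  exact: leq_trans (M0 _ HS') cS'.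
have : S0 \in K [ffun w => D1 w && D2 w] u by [].
rewrite !inE ffunE => /andP [A1 A2].
have K1 : S0 :&: G \in K D1 u.
  rewrite inE (@flip_agree D1 G u _ S0 H1) // => y Hy; by rewrite !inE Hy andbT.
have K2 : S0 :&: ~: G \in K D2 u.
  rewrite inE (@flip_agree D2 (~: G) u _ S0 H2) // => y; rewrite [in X in X -> _]inE => Hy; by rewrite !inE Hy andbT.
rewrite -(cardsID G S0) finset.setDE.
exact: leq_add (M1 _ K1) (M2 _ K2).
Qed.

Definition mg (G : {set X}) (v w : asg X) : asg X :=
  [ffun y => if y \in G then v y else w y].

Lemma factor (R : comRingType) (G : {set X}) (p1 p2 : asg X -> R) :
  (forall u u', (forall y, y \in G -> u y = u' y) -> p1 u = p1 u') ->
  (forall u u', (forall y, y \in ~: G -> u y = u' y) -> p2 u = p2 u') ->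
  (\sum_u p1 u * p2 u) * #|{: asg X}|%:R = (\sum_u p1 u) * (\sum_u p2 u).
Proof.
move=> H1 H2; symmetry.
rewrite [LHS]mulr_suml.
under eq_bigr do rewrite mulr_sumr.
have E : forall v w, p1 v * p2 w = p1 (mg G v w) * p2 (mg G v w).
  move=> v w; congr (_ * _).
    by apply: H1 => y Hy; rewrite /mg ffunE Hy.
  by apply: H2 => y; rewrite inE /mg ffunE => /negbTE ->.
under eq_bigr do under eq_bigr do rewrite E.
rewrite pair_bigA /=.
pose iota (p : asg X * asg X) := (mg G p.1 p.2, mg G p.2 p.1).
have iotaK : involutive iota.
  move=> [v w]; rewrite /iota /=; congr pair; apply/ffunP => y; rewrite /mg !ffunE;
  by case: (y \in G).
rewrite (reindex_inj (inv_inj iotaK)) /=.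
have E2 : forall p : asg X * asg X, mg G (iota p).1 (iota p).2 = p.1.
  move=> [v w]; apply/ffunP => y; rewrite /iota /mg /= !ffunE; by case: (y \in G).
under eq_bigr do rewrite E2.
rewrite -(pair_bigA _ (fun v w => p1 v * p2 v)) /=.
rewrite mulr_suml; apply: eq_bigr => v _.
by rewrite sumr_const mulr_natr cardT.
Qed.
End Helpers.

Section Main.
Variable R : realType.
Variable X : finType.
Variable rho : option nat -> R.
Hypothesis Hrho : share_function rho.

Lemma rho_ole o1 o2 : ole o1 o2 -> rho o2 <= rho o1.
Proof.
case: Hrho => Hm HN _ _ _.
by case: o2 => [k2|]; case: o1 => [k1|] //= H; try exact: Hm; try exact: HN.
Qed.

Lemma rho_bound o : 0 <= rho o <= 1.
Proof.
case: Hrho => Hm HN H0 _ H1.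
case: o => [k|]; last by rewrite H0 ler01 lexx.
by rewrite -H0 HN /= -H1 Hm.
Qed.

Let N := (#|{: asg X}|%:R : R).

Lemma N_gt0 : 0 < N.
Proof. rewrite /N ltr0n; apply/card_gt0P; by exists ([ffun=> true] : asg X). Qed.

Lemma MBE (x : X) (f : BF X) : @MB X R rho x f = N^-1 * \sum_(u : asg X) rho (mscs u x f).
Proof. by []. Qed.

Lemma MB_DD : derivative_dependent (@MB X R rho).
Proof.
move=> f g x Hle; rewrite !MBE; apply: ler_wpM2l.
  by rewrite invr_ge0 ltW // N_gt0.
apply: ler_sum => u _; rewrite !mscs_K; apply: rho_ole; apply: K_sub => w.
by move/implyP: (Hle w).
Qed.

Lemma MB_unbiased : unbiased (@MB X R rho).
Proof. by move=> x g; rewrite !MBE; congr (_ * _); apply: eq_bigr => u _; rewrite mscs_neg. Qed.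

Lemma MB_const1 (x : X) (f : BF X) : (forall u, mscs u x f = Some 0%N) -> @MB X R rho x f = 1.
Proof.
case: Hrho => _ _ _ _ H1 H.
rewrite MBE; under eq_bigr do rewrite H H1.
by rewrite sumr_const -/N mulVf // gt_eqF // N_gt0.
Qed.

Lemma MB_IVF : is_IVF (@MB X R rho).
Proof.
have Np := N_gt0.
split.
- move=> x f; rewrite MBE; apply/andP; split.
    apply: mulr_ge0; first by rewrite invr_ge0 ltW.
    by apply: sumr_ge0 => u _; case/andP: (rho_bound (mscs u x f)).
  rewrite -(mulVf (lt0r_neq0 Np)) ler_pM2l ?invr_gt0 //.
  rewrite /N -sumr_const; apply: ler_sum => u _.
  by case/andP: (rho_bound (mscs u x f)).
- move=> x f Hx; rewrite MBE big1 ?mulr0 // => u _.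
  by case: Hrho => _ _ H0 _ _; rewrite mscs_nodep.
- move=> x; split; apply: MB_const1 => u; [exact: mscs_var|exact: mscs_negvar].
- move=> x y s f; split; rewrite !MBE.
    congr (_ * _); rewrite [RHS](reindex_inj (h := perm_asg s)); last exact: perm_asg_inj.
    by apply: eq_bigr => u _; rewrite mscs_perm.
  congr (_ * _); under [RHS]eq_bigr do rewrite mscs_flipBF.
  rewrite [RHS](reindex_inj (h := fun u => flip u [set y])) /=; last exact: (@can_inj _ _ _ (fun u => flip u [set y]) (fun u => flipK1 u [set y])).
  by apply: eq_bigr => u _; rewrite flipK1.
- move=> x f h g lf zf lh zh [[_ Hdf Ef] Mf] [[_ Hdh Eh] Mh] H1 H0 Hx.
  apply: MB_DD => w; rewrite Ef Eh.
  rewrite !Dx_subst;  last first.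
  all: try by rewrite (disjointFl Hdf Hx).
  all: try by rewrite (disjointFl Hdh Hx).
  move: (H1 w) (H0 w) (Mf w) (Mh w).
  case: (Dx x g w); case: (cof lh zh true w); case: (cof lh zh false w);
  case: (cof lf zf true w); case: (cof lf zf false w) => //.
Qed.

Lemma DxE (x : X) (F : BF X) w : Dx x F w = cof F x true w (+) cof F x false w.
Proof. by rewrite /Dx ffunE. Qed.

Lemma MB_chain : (exists lam : R, 0 <= lam < 1 /\
      forall k : nat, (1 <= k)%N -> rho (Some k) = lam ^+ k) ->
   chain_rule_decomposable (@MB X R rho).
Proof.
move=> [lam [_ Hlam]].
case: Hrho => _ _ HN _ H1.
have Hpow k : rho (Some k) = lam ^+ k.
  by case: k => [|k]; [rewrite H1 expr0|apply: Hlam].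
have rho_add o1 o2 : rho (oadd o1 o2) = rho o1 * rho o2.
  case: o1 => [a|]; case: o2 => [b|] /=; rewrite ?HN ?mul0r ?mulr0 //.
  by rewrite !Hpow exprD.
move=> f g l z x xg [[u1 [u2 Hnc]] Hd Ef] Hx Hxg.
set G := dep g.
set a := cof l z true. set b := cof l z false.
have Hxl : x \notin dep l by rewrite (disjointFl Hd Hx).
have depl y c : y \in dep (cof l z c) -> y \in dep l.
  by apply: contraTT; apply: dep_cof.
have depG y c : y \in dep (cof l z c) -> y \notin G.
  by move/depl => Hy; rewrite (disjointFr Hd Hy).
have Hab c0 w d : cof l z c0 (upd w xg d) = cof l z c0 w.
  apply: nodep_upd' => {d} w.
  case HxG: (xg \in G).
    have Hxgl : xg \notin dep l by rewrite (disjointFl Hd HxG).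
    by rewrite !(nodep_cof _ _ Hxgl).
  have [v Hv] : exists v, g v = c0.
    case E1: (g u1 == c0); first by exists u1; apply/eqP.
    exists u2; move: Hnc E1; by case: (g u1); case: (g u2); case: c0.
  set w' := mg G v w.
  have Hf d : f (upd w' xg d) = cof l z c0 (upd w xg d).
    have Hg : g (upd w' xg d) = c0.
      rewrite (nodep_upd (negbT HxG)) -Hv; apply: dep_agree => y Hy.
      by rewrite /w' /mg ffunE Hy.
    have Hc c1 : cof l z c1 (upd w' xg d) = cof l z c1 (upd w xg d).
      apply: dep_agree => y /depG Hy; rewrite /upd !ffunE.
      case: (y == xg) => //; by rewrite (negbTE Hy).
    rewrite Ef /subst ffunE Hg !Hc; by clear Hv Hg; case: c0; rewrite /= ?orbF.
  by rewrite -!Hf; apply: nodepP.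
set D1 := Dx x g.
set D2 : BF X := [ffun w => a w (+) b w].
have dpo1 : dpo D1 G.
  move=> u u' H; rewrite /D1 !DxE /cof !ffunE; congr (_ (+) _); apply: dep_agree => y Hy;
  by rewrite /upd !ffunE H.
have dpo2 : dpo D2 (~: G).
  move=> u u' H; rewrite /D2 !ffunE; congr (_ (+) _); apply: dep_agree => y Hy;
  rewrite /upd !ffunE; case: (y == z) => //; apply: H; by rewrite inE (disjointFr Hd Hy).
have Ef' u : mscs u x f = msz (K [ffun w => D1 w && D2 w] u).
  rewrite mscs_K; apply: K_ext => S; rewrite Ef Dx_subst // !ffunE.
  by [].
have EF u : mscs u xg (subst_g l z xg) = msz (K D2 u).
  have Fc c w : cof (subst_g l z xg) xg c w = if c then a w else b w.
    rewrite [cof (subst_g _ _ _) _ _ _]ffunE /subst_g ffunE !Hab /upd ffunE eqxx.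
    by case: c => /=; [rewrite orbF|].
  rewrite mscs_K; apply: K_ext => S; by rewrite DxE !Fc /D2 [in RHS]ffunE.
set p1 := fun u => rho (msz (K D1 u)).
set p2 := fun u => rho (msz (K D2 u)).
have Hfac := @factor X R G p1 p2.
have Hsum : (\sum_u rho (mscs u x f)) * N = (\sum_u p1 u) * (\sum_u p2 u).
  rewrite -Hfac.
  - congr (_ * _); apply: eq_bigr => u _; by rewrite Ef' (msz_split _ dpo1 dpo2) rho_add.
  - move=> u u' H; rewrite /p1; congr rho; apply: K_ext => S; apply: dpo1 => y Hy.
    by rewrite /flip !ffunE H.
  - move=> u u' H; rewrite /p2; congr rho; apply: K_ext => S; apply: dpo2 => y Hy.
    by rewrite /flip !ffunE H.
rewrite !MBE.
have -> : \sum_u rho (mscs u x g) = \sum_u p1 u.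
  by apply: eq_bigr => u _; rewrite mscs_K.
have -> : \sum_u rho (mscs u xg (subst_g l z xg)) = \sum_u p2 u.
  by apply: eq_bigr => u _; rewrite EF.
have Nn0 : N != 0 by rewrite lt0r_neq0 // N_gt0.
have -> : \sum_u rho (mscs u x f) = (\sum_u p1 u) * (\sum_u p2 u) / N.
  by rewrite -Hsum mulfK.
rewrite -[RHS]mulrA; congr (_ * _); rewrite -mulrA; congr (_ * _); exact: mulrC.
Qed.

Lemma mainTheorem5_aux :
  [/\ is_IVF (@MB X R rho), unbiased (@MB X R rho) & derivative_dependent (@MB X R rho)] /\
  ((exists lam : R, 0 <= lam < 1 /\
      forall k : nat, (1 <= k)%N -> rho (Some k) = lam ^+ k) ->
   chain_rule_decomposable (@MB X R rho)).
Proof. split; [split; [exact: MB_IVF|exact: MB_unbiased|exact: MB_DD]|exact: MB_chain]. Qed.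

End Main.

Theorem mainTheorem5 (R : realType) (X : finType) (rho : option nat -> R) :
  share_function rho ->
  [/\ is_IVF (@MB X R rho), unbiased (@MB X R rho) & derivative_dependent (@MB X R rho)] /\
  ((exists lam : R, 0 <= lam < 1 /\
      forall k : nat, (1 <= k)%N -> rho (Some k) = lam ^+ k) ->
   chain_rule_decomposable (@MB X R rho)).
Proof. by move=> H; apply: mainTheorem5_aux. Qed.
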